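(* There exists a constant $C_\Gamma$ depending only on $\Gamma$ such that, for $n$ large enough and every realization, $$\sup_{t\in[0,T]}\|C^n_t\|_{-3}\le T\,C_\Gamma\big(S_n^{(ij,ik)}+S_n^{(ij,jk)}\big),$$ where $\|\cdot\|_{-3}$ is the norm of $H^{-3}(\mathbb T^2)$.
   Context: $\mathbb T=\mathbb R/2\pi\mathbb Z$, $\Gamma\in C^\infty(\mathbb T^2)$, $T>0$. For $n\ge2$, $p_n\in(0,1]$, $\xi^{(n)}_{ij}\in\{0,1\}$, $\hat\xi^{(n)}_{ij}=\xi^{(n)}_{ij}/p_n-1$. Let $t\mapsto(\theta^{1,n}_t,\dots,\theta^{n,n}_t)$ be continuous $\mathbb T^n$-valued paths (e.g. the solution of $d\theta^{i,n}_t=\frac1{np_n}\sum_j\xi^{(n)}_{ij}\Gamma(\theta^{i,n}_t,\theta^{j,n}_t)dt+dB^i_t$). For test functions $g$ on $\mathbb T^2$, $C^n_t(g)=\int_0^t\frac1{n^3}\sum_{i,j,k}\hat\xi^{(n)}_{ij}\hat\xi^{(n)}_{ik}\partial_{\theta_1}g(\theta^{i,n}_s,\theta^{j,n}_s)\Gamma(\theta^{i,n}_s,\theta^{k,n}_s)ds+\int_0^t\frac1{n^3}\sum_{i,j,k}\hat\xi^{(n)}_{ij}\hat\xi^{(n)}_{jk}\partial_{\theta_2}g(\theta^{i,n}_s,\theta^{j,n}_s)\Gamma(\theta^{j,n}_s,\theta^{k,n}_s)ds$. Define $S_n^{(ij,ik)}=\sup_{r,s,t\in\{\pm1\}^n}\big|\frac1{n^3}\sum_{i,j,k}\hat\xi^{(n)}_{ij}\hat\xi^{(n)}_{ik}r_is_jt_k\big|$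 and $S_n^{(ij,jk)}=\sup_{r,s,t\in\{\pm1\}^n}\big|\frac1{n^3}\sum_{i,j,k}\hat\xi^{(n)}_{ij}\hat\xi^{(n)}_{jk}r_is_jt_k\big|$. *)

(* Defs.v *)
From Stdlib Require Import Reals List.
From Coquelicot Require Import Coquelicot.
Open Scope R_scope.

(** Finite sum over indices 0..n-1 (indices i = 1..n of the paper shifted by one). *)
Fixpoint fsum (n : nat) (f : nat -> R) : R :=
  match n with
  | O => 0
  | S m => fsum m f + f m
  end.

(** Functions on the torus T^2 = (R/2piZ)^2 are represented by their
    2pi-periodic lifts R -> R -> R. *)
Definition periodic2 (f : R -> R -> R) : Prop :=
  forall x y, f (x + 2 * PI) y = f x y /\ f x (y + 2 * PI) = f x y.

Definition pdir (d : bool) (f : R -> R -> R) : R -> R -> R :=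
  if d then fun x y => Derive (fun x' => f x' y) x
  else fun x y => Derive (fun y' => f x y') y.

Fixpoint pdl (l : list bool) (f : R -> R -> R) : R -> R -> R :=
  match l with
  | nil => f
  | d :: l' => pdir d (pdl l' f)
  end.

Definition continuous2 (f : R -> R -> R) : Prop :=
  forall x y, continuous (fun z : R * R => f (fst z) (snd z)) (x, y).

Definition smooth_T2 (f : R -> R -> R) : Prop :=
  periodic2 f /\
  forall l : list bool,
    continuous2 (pdl l f) /\
    (forall x y, ex_derive (fun x' => pdl l f x' y) x /\
                 ex_derive (fun y' => pdl l f x y') y).

Definition pd (a b : nat) (f : R -> R -> R) : R -> R -> R :=
  pdl (repeat true a ++ repeat false b) f.

Definition int_T2 (f : R -> R -> R) : R :=
  RInt (fun x => RInt (fun y => f x y) 0 (2 * PI)) 0 (2 * PI).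

Definition H3norm (g : R -> R -> R) : R :=
  sqrt (fsum 4 (fun a => fsum (4 - a) (fun b =>
          int_T2 (fun x y => (pd a b g x y) ^ 2)))).

Definition Hm3norm (L : (R -> R -> R) -> R) : Rbar :=
  Lub_Rbar (fun v => exists g, smooth_T2 g /\ H3norm g <= 1 /\ v = Rabs (L g)).

Definition b2R (b : bool) : R := if b then 1 else 0.
Definition sgn (b : bool) : R := if b then 1 else -1.

Definition xihat (p : R) (xi : nat -> nat -> bool) (i j : nat) : R :=
  b2R (xi i j) / p - 1.

(** The functional C^n_t(g); theta i s is (a lift of) theta^{i,n}_s. *)
Definition Cn (n : nat) (p : R) (xi : nat -> nat -> bool) (Gam : R -> R -> R)
  (theta : nat -> R -> R) (t : R) (g : R -> R -> R) : R :=
  RInt (fun s => / (INR n ^ 3) *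
    fsum n (fun i => fsum n (fun j => fsum n (fun k =>
      xihat p xi i j * xihat p xi i k *
      pdl (true :: nil) g (theta i s) (theta j s) *
      Gam (theta i s) (theta k s))))) 0 t
  + RInt (fun s => / (INR n ^ 3) *
    fsum n (fun i => fsum n (fun j => fsum n (fun k =>
      xihat p xi i j * xihat p xi j k *
      pdl (false :: nil) g (theta i s) (theta j s) *
      Gam (theta j s) (theta k s))))) 0 t.

(** S_n^{(ij,ik)} and S_n^{(ij,jk)}: suprema over sign vectors r,s,t in {+-1}^n
    (encoded as bool-valued functions; only the first n entries matter). The
    suprema are over finitely many values, hence finite; we take the real part. *)
Definition S_ijik (n : nat) (p : R) (xi : nat -> nat -> bool) : R :=
  real (Lub_Rbar (fun v => exists r s t : nat -> bool,
    v = Rabs (/ (INR n ^ 3) *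
      fsum n (fun i => fsum n (fun j => fsum n (fun k =>
        xihat p xi i j * xihat p xi i k * sgn (r i) * sgn (s j) * sgn (t k))))))).

Definition S_ijjk (n : nat) (p : R) (xi : nat -> nat -> bool) : R :=
  real (Lub_Rbar (fun v => exists r s t : nat -> bool,
    v = Rabs (/ (INR n ^ 3) *
      fsum n (fun i => fsum n (fun j => fsum n (fun k =>
        xihat p xi i j * xihat p xi j k * sgn (r i) * sgn (s j) * sgn (t k))))))).

(* Main.v *)
Require Import Defs.
From Stdlib Require Import Reals Lra Lia FunctionalExtensionality List ZArith.
From Coquelicot Require Import Coquelicot.
Open Scope R_scope.

Lemma fsum_ext n f g : (forall i, (i < n)%nat -> f i = g i) -> fsum n f = fsum n g.
Proof. induction n; simpl; intros H; auto. rewrite IHn by (intros; apply H; lia). rewrite H by lia; auto. Qed.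

Lemma fsum_plus n f g : fsum n (fun i => f i + g i) = fsum n f + fsum n g.
Proof. induction n; simpl; [lra|]. rewrite IHn; lra. Qed.

Lemma fsum_scal n c f : fsum n (fun i => c * f i) = c * fsum n f.
Proof. induction n; simpl; [lra|]. rewrite IHn; lra. Qed.

Lemma fsum_zero n : fsum n (fun _ => 0) = 0.
Proof. induction n; simpl; [lra|]. rewrite IHn; lra. Qed.

Lemma fsum_swap n m f : fsum n (fun i => fsum m (fun j => f i j)) = fsum m (fun j => fsum n (fun i => f i j)).
Proof.
  induction n; simpl. { rewrite fsum_zero; auto. }
  rewrite IHn. rewrite <- fsum_plus. auto.
Qed.

Lemma fsum_abs n f : Rabs (fsum n f) <= fsum n (fun i => Rabs (f i)).
Proof. induction n; simpl. { rewrite Rabs_R0; lra. }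
  eapply Rle_trans; [apply Rabs_triang|]. lra. Qed.

Lemma fsum_le n f g : (forall i, (i < n)%nat -> f i <= g i) -> fsum n f <= fsum n g.
Proof. induction n; simpl; intros H; [lra|].
  assert (fsum n f <= fsum n g) by (apply IHn; intros; apply H; lia).
  specialize (H n ltac:(lia)). lra. Qed.

Lemma fsum_const_le n f B : (forall i, (i < n)%nat -> Rabs (f i) <= B) -> Rabs (fsum n f) <= INR n * B.
Proof. intros H. eapply Rle_trans; [apply fsum_abs|].
  induction n; cbn [fsum]. { simpl; lra. }
  assert (fsum n (fun i => Rabs (f i)) <= INR n * B) by (apply IHn; intros; apply H; lia).
  specialize (H n ltac:(lia)). rewrite S_INR. lra. Qed.

Lemma fsum_nonneg_term n f k : (forall i, (i < n)%nat -> 0 <= f i) -> (k < n)%nat -> f k <= fsum n f.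
Proof. induction n; intros H Hk; simpl; [lia|].
  assert (0 <= fsum n f).
  { clear IHn Hk. induction n; simpl; [lra|].
    assert (0 <= fsum n f) by (apply IHn; intros; apply H; lia). specialize (H n ltac:(lia)). lra. }
  destruct (Nat.eq_dec k n). { subst. lra. }
  assert (f k <= fsum n f) by (apply IHn; [intros; apply H; lia|lia]).
  specialize (H n ltac:(lia)). lra. Qed.

Lemma fsum_nonneg n f : (forall i, (i < n)%nat -> 0 <= f i) -> 0 <= fsum n f.
Proof. induction n; intros H; simpl; [lra|].
  assert (0 <= fsum n f) by (apply IHn; intros; apply H; lia). specialize (H n ltac:(lia)). lra. Qed.

Lemma RInt_scalR (f : R -> R) a b k : ex_RInt f a b -> RInt (fun x => k * f x) a b = k * RInt f a b.
Proof. intros H. apply (RInt_scal f a b k H). Qed.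

Lemma ex_RInt_scalR (f : R -> R) a b k : ex_RInt f a b -> ex_RInt (fun x => k * f x) a b.
Proof. intros H. apply (ex_RInt_scal f a b k H). Qed.

Lemma RInt_plusR (f g : R -> R) a b : ex_RInt f a b -> ex_RInt g a b -> RInt (fun x => f x + g x) a b = RInt f a b + RInt g a b.
Proof. intros H1 H2. apply (RInt_plus f g a b H1 H2). Qed.

Lemma ex_RInt_plusR (f g : R -> R) a b : ex_RInt f a b -> ex_RInt g a b -> ex_RInt (fun x => f x + g x) a b.
Proof. intros H1 H2. apply (ex_RInt_plus f g a b H1 H2). Qed.

Lemma RInt_minusR (f g : R -> R) a b : ex_RInt f a b -> ex_RInt g a b -> RInt (fun x => f x - g x) a b = RInt f a b - RInt g a b.
Proof. intros H1 H2. apply (RInt_minus f g a b H1 H2). Qed.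

Lemma ex_RInt_minusR (f g : R -> R) a b : ex_RInt f a b -> ex_RInt g a b -> ex_RInt (fun x => f x - g x) a b.
Proof. intros H1 H2. apply (ex_RInt_minus f g a b H1 H2). Qed.

Lemma RInt_constR a b (c : R) : RInt (fun _ => c) a b = (b - a) * c.
Proof. apply (RInt_const a b c). Qed.

Lemma RInt_ChaslesR (f : R -> R) a b c : ex_RInt f a b -> ex_RInt f b c -> RInt f a b + RInt f b c = RInt f a c.
Proof. intros H1 H2. apply (RInt_Chasles f a b c H1 H2). Qed.

Lemma ex_RInt_fsum n (f : nat -> R -> R) a b : (forall i, (i < n)%nat -> ex_RInt (f i) a b) ->
  ex_RInt (fun s => fsum n (fun i => f i s)) a b.
Proof. induction n; intros H; simpl. { apply ex_RInt_const. }
  apply ex_RInt_plusR; [apply IHn; intros; apply H; lia| apply H; lia]. Qed.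

Lemma RInt_fsum n (f : nat -> R -> R) a b : (forall i, (i < n)%nat -> ex_RInt (f i) a b) ->
  RInt (fun s => fsum n (fun i => f i s)) a b = fsum n (fun i => RInt (f i) a b).
Proof. induction n; intros H; simpl. { rewrite RInt_constR. lra. }
  rewrite RInt_plusR; [| apply ex_RInt_fsum; intros; apply H; lia| apply H; lia].
  rewrite IHn by (intros; apply H; lia). auto. Qed.

Lemma RInt_abs_bound (f h : R -> R) a b : a <= b -> ex_RInt f a b -> ex_RInt h a b ->
  (forall x, a < x < b -> Rabs (f x) <= h x) -> Rabs (RInt f a b) <= RInt h a b.
Proof. intros Hab Hf Hh H. apply Rabs_le. split.
  - assert (RInt (fun x => - h x) a b <= RInt f a b).
    { apply RInt_le; auto. { apply (ex_RInt_opp h a b Hh). }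
      intros x Hx. specialize (H x Hx). apply Rabs_le_between in H. lra. }
    assert (RInt (fun x => - h x) a b = - RInt h a b).
    { replace (fun x => - h x) with (fun x => (-1) * h x) by (apply functional_extensionality; intros; ring).
      rewrite RInt_scalR by auto. cbn. ring. }
    lra.
  - apply RInt_le; auto. intros x Hx. specialize (H x Hx). apply Rabs_le_between in H. lra.
Qed.

Definition tri n (A : nat -> nat -> nat -> R) (r s t : nat -> R) :=
  fsum n (fun i => fsum n (fun j => fsum n (fun k => A i j k * r i * s j * t k))).

Definition sg_of (x : R) : bool := if Rle_dec 0 x then true else false.

Lemma sgn_abs x : x * sgn (sg_of x) = Rabs x.
Proof. unfold sg_of, sgn. destruct (Rle_dec 0 x).
  - rewrite Rabs_right by lra. ring.
  - rewrite Rabs_left by lra. ring. Qed.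

Lemma sgn_bound b : Rabs (sgn b) <= 1.
Proof. destruct b; simpl; unfold Rabs; destruct Rcase_abs; lra. Qed.

Lemma lin_sign n c r : (forall i, Rabs (r i) <= 1) ->
  Rabs (fsum n (fun i => c i * r i)) <= Rabs (fsum n (fun i => c i * sgn (sg_of (c i)))).
Proof. intros H.
  rewrite (fsum_ext n (fun i => c i * sgn (sg_of (c i))) (fun i => Rabs (c i)))
    by (intros; apply sgn_abs).
  eapply Rle_trans; [apply fsum_abs|].
  rewrite (Rabs_right (fsum n (fun i => Rabs (c i)))).
  2:{ apply Rle_ge, fsum_nonneg. intros; apply Rabs_pos. }
  apply fsum_le. intros i _. rewrite Rabs_mult.
  specialize (H i). pose proof (Rabs_pos (c i)). pose proof (Rabs_pos (r i)). nra.
Qed.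

Lemma tri_r n A r s t : tri n A r s t =
  fsum n (fun i => fsum n (fun j => fsum n (fun k => A i j k * s j * t k)) * r i).
Proof. unfold tri. apply fsum_ext; intros i _.
  rewrite Rmult_comm, <- fsum_scal. apply fsum_ext; intros j _.
  rewrite <- fsum_scal. apply fsum_ext; intros k _. ring. Qed.

Lemma tri_s n A r s t : tri n A r s t =
  fsum n (fun j => fsum n (fun i => fsum n (fun k => A i j k * r i * t k)) * s j).
Proof. unfold tri. rewrite fsum_swap. apply fsum_ext; intros j _.
  rewrite Rmult_comm, <- fsum_scal. apply fsum_ext; intros i _.
  rewrite <- fsum_scal. apply fsum_ext; intros k _. ring. Qed.

Lemma tri_t n A r s t : tri n A r s t =
  fsum n (fun k => fsum n (fun i => fsum n (fun j => A i j k * r i * s j)) * t k).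
Proof. unfold tri.
  rewrite (fsum_ext n _ (fun i => fsum n (fun k => fsum n (fun j => A i j k * r i * s j * t k))))
    by (intros; apply fsum_swap).
  rewrite fsum_swap. apply fsum_ext; intros k _.
  rewrite Rmult_comm, <- fsum_scal. apply fsum_ext; intros i _.
  rewrite <- fsum_scal. apply fsum_ext; intros j _. ring. Qed.

Lemma tri_sign n A M :
  (forall r s t : nat -> bool, Rabs (tri n A (fun i => sgn (r i)) (fun j => sgn (s j)) (fun k => sgn (t k))) <= M) ->
  forall r s t : nat -> R, (forall i, Rabs (r i) <= 1) -> (forall i, Rabs (s i) <= 1) -> (forall i, Rabs (t i) <= 1) ->
  Rabs (tri n A r s t) <= M.
Proof.
  intros H r s t Hr Hs Ht.
  rewrite tri_r. eapply Rle_trans; [apply lin_sign; auto|].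
  set (r' := fun i => sgn (sg_of (fsum n (fun j => fsum n (fun k => A i j k * s j * t k))))).
  change (Rabs (fsum n (fun i => fsum n (fun j => fsum n (fun k => A i j k * s j * t k)) * r' i)) <= M).
  rewrite <- tri_r. rewrite tri_s. eapply Rle_trans; [apply lin_sign; auto|].
  set (s' := fun j => sgn (sg_of (fsum n (fun i => fsum n (fun k => A i j k * r' i * t k))))).
  change (Rabs (fsum n (fun j => fsum n (fun i => fsum n (fun k => A i j k * r' i * t k)) * s' j)) <= M).
  rewrite <- tri_s. rewrite tri_t. eapply Rle_trans; [apply lin_sign; auto|].
  set (t' := fun k => sgn (sg_of (fsum n (fun i => fsum n (fun j => A i j k * r' i * s' j))))).
  change (Rabs (fsum n (fun k => fsum n (fun i => fsum n (fun j => A i j k * r' i * s' j)) * t' k)) <= M).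
  rewrite <- tri_t. apply H.
Qed.

Lemma lub_ge (E : R -> Prop) B v : (forall w, E w -> w <= B) -> E v -> v <= real (Lub_Rbar E).
Proof. intros HB Hv. destruct (Lub_Rbar_correct E) as [Hub Hl].
  assert (H1 : Rbar_le v (Lub_Rbar E)) by (apply Hub; auto).
  assert (H2 : Rbar_le (Lub_Rbar E) B) by (apply Hl; intros w Hw; simpl; apply HB; auto).
  destruct (Lub_Rbar E); simpl in *; auto; contradiction. Qed.

Notation LL := (2 * PI).

Lemma LL_pos : 0 < LL.
Proof. pose proof PI_RGT_0; lra. Qed.
Lemma LL_ge1 : 1 <= LL.
Proof. pose proof PI_RGT_0. pose proof PI_4. pose proof PI2_3_2. lra. Qed.

Lemma cont_eps (f : R -> R) x :
  (forall eps, 0 < eps -> exists d, 0 < d /\ forall y, Rabs (y - x) < d -> Rabs (f y - f x) < eps) ->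
  continuous f x.
Proof. intros H. apply continuity_pt_filterlim. intros eps Heps.
  destruct (H eps Heps) as [d [Hd Hy]]. exists d. split; [lra|].
  intros y [_ Hyd]. apply Hy. exact Hyd. Qed.

Lemma cont_to_pt (f : R -> R) x : continuous f x -> continuity_pt f x.
Proof. intros H. apply continuity_pt_filterlim. exact H. Qed.

Lemma c2d_slice2 φ s t : continuity_2d_pt φ s t -> continuous (fun t => φ s t) t.
Proof. intros H. apply cont_eps. intros eps Heps.
  destruct (H (mkposreal eps Heps)) as [d Hd]. exists d. split; [apply cond_pos|].
  intros y Hy. apply Hd; auto. rewrite Rminus_diag, Rabs_R0. apply cond_pos. Qed.

Lemma c2d_slice1 φ s t : continuity_2d_pt φ s t -> continuous (fun s => φ s t) s.
Proof. intros H. apply cont_eps. intros eps Heps.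
  destruct (H (mkposreal eps Heps)) as [d Hd]. exists d. split; [apply cond_pos|].
  intros y Hy. apply Hd; auto. rewrite Rminus_diag, Rabs_R0. apply cond_pos. Qed.

Lemma c2d_of_cont_t (u : R -> R) s t : continuous u t -> continuity_2d_pt (fun _ t => u t) s t.
Proof. intros H. apply (continuity_1d_2d_pt_comp u (fun _ v => v)).
  apply cont_to_pt; auto. apply continuity_2d_pt_id2. Qed.

Lemma c2d_of_cont_s (u : R -> R) s t : continuous u s -> continuity_2d_pt (fun s _ => u s) s t.
Proof. intros H. apply (continuity_1d_2d_pt_comp u (fun v _ => v)).
  apply cont_to_pt; auto. apply continuity_2d_pt_id1. Qed.

Lemma c2d_abs φ s t : continuity_2d_pt φ s t -> continuity_2d_pt (fun s t => Rabs (φ s t)) s t.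
Proof. intros H. apply (continuity_1d_2d_pt_comp Rabs φ); auto.
  apply cont_to_pt, continuous_Rabs. Qed.

Lemma ex_RInt_cont (f : R -> R) a b : (forall x, continuous f x) -> ex_RInt f a b.
Proof. intros H. apply (ex_RInt_continuous (V := R_CompleteNormedModule)). intros; apply H. Qed.

Lemma param_cont (φ : R -> R -> R) a b s0 : a <= b -> (forall s t, continuity_2d_pt φ s t) ->
  continuous (fun s => RInt (fun t => φ s t) a b) s0.
Proof.
  intros Hab Hc. apply cont_eps. intros eps Heps.
  set (e' := eps / (b - a + 1)).
  assert (He' : 0 < e') by (unfold e'; apply Rdiv_lt_0_compat; lra).
  destruct (uniform_continuity_2d_1d' φ a b s0 (fun x _ => Hc s0 x) (mkposreal e' He')) as [d Hd].
  exists d. split; [apply cond_pos|]. intros y Hy.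
  assert (Ex : forall s, ex_RInt (fun t => φ s t) a b)
    by (intros; apply ex_RInt_cont; intros; apply c2d_slice2, Hc).
  rewrite <- RInt_minusR by auto.
  apply Rle_lt_trans with ((b - a) * e').
  - apply abs_RInt_le_const; auto. { apply ex_RInt_minusR; auto. }
    intros t Ht. left. simpl in Hd.
    pose proof (cond_pos d) as dpos.
    apply (Hd t s0 t y); try lra.
    + apply Rabs_lt_between' in Hy. lra.
    + rewrite Rminus_diag, Rabs_R0; apply cond_pos.
  - unfold e'. apply Rmult_lt_reg_r with (b - a + 1); [lra|].
    field_simplify; lra.
Qed.

Definition KP (k : R -> R) :=
  (forall t, 0 <= t <= LL -> Rabs (k t) <= 1) /\
  exists c u v, 0 <= c <= LL /\ (forall t, continuous u t) /\ (forall t, continuous v t) /\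
    (forall t, 0 < t < c -> k t = u t) /\ (forall t, c < t < LL -> k t = v t).

Lemma KP_int k f : KP k -> (forall t, continuous f t) -> ex_RInt (fun t => k t * f t) 0 LL.
Proof. intros [_ [c [u [v [Hc [Hu [Hv [E1 E2]]]]]]]] Hf.
  apply ex_RInt_Chasles with c.
  - apply ex_RInt_ext with (fun t => u t * f t).
    { intros x Hx. rewrite Rmin_left, Rmax_right in Hx by lra. rewrite E1; auto. }
    apply ex_RInt_cont. intros; apply (continuous_mult u f); auto.
  - apply ex_RInt_ext with (fun t => v t * f t).
    { intros x Hx. rewrite Rmin_left, Rmax_right in Hx by lra. rewrite E2; auto. }
    apply ex_RInt_cont. intros; apply (continuous_mult v f); auto.
Qed.

Lemma KP_cont k φ s0 : KP k -> (forall s t, continuity_2d_pt φ s t) ->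
  continuous (fun s => RInt (fun t => k t * φ s t) 0 LL) s0.
Proof. intros HK Hφ. pose proof HK as [_ [c [u [v [Hc [Hu [Hv [E1 E2]]]]]]]].
  apply continuous_ext with
    (fun s => RInt (fun t => u t * φ s t) 0 c + RInt (fun t => v t * φ s t) c LL).
  { intros s.
    assert (HI : ex_RInt (fun t => k t * φ s t) 0 LL)
      by (apply KP_int; auto; intros; apply c2d_slice2; auto).
    rewrite <- (RInt_ChaslesR (fun t => k t * φ s t) 0 c LL).
    2: apply (ex_RInt_Chasles_1 (V:=R_CompleteNormedModule) _ 0 c LL); [lra|exact HI].
    2: apply (ex_RInt_Chasles_2 (V:=R_CompleteNormedModule) _ 0 c LL); [lra|exact HI].
    f_equal; apply RInt_ext; intros x Hx.
    - rewrite Rmin_left, Rmax_right in Hx by lra. rewrite E1; auto.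
    - rewrite Rmin_left, Rmax_right in Hx by lra. rewrite E2; auto. }
  apply (continuous_plus (fun s => RInt (fun t => u t * φ s t) 0 c) (fun s => RInt (fun t => v t * φ s t) c LL));
   apply param_cont; try lra; intros; apply continuity_2d_pt_mult; auto; apply c2d_of_cont_t; auto.
Qed.

Definition C2 (φ : R -> R -> R) := forall s t, continuity_2d_pt φ s t.

Lemma inner_scal (α : R) b φ s : KP b -> C2 φ ->
  RInt (fun t => α * b t * φ s t) 0 LL = α * RInt (fun t => b t * φ s t) 0 LL.
Proof. intros Hb Hφ. rewrite <- RInt_scalR.
  - apply RInt_ext; intros; cbn; ring.
  - apply KP_int; auto; intros; apply c2d_slice2; auto. Qed.

Lemma ex_inner (α : R) b φ s : KP b -> C2 φ -> ex_RInt (fun t => α * b t * φ s t) 0 LL.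
Proof. intros Hb Hφ. apply ex_RInt_ext with (fun t => α * (b t * φ s t)).
  { intros; cbn; ring. }
  apply ex_RInt_scalR. apply KP_int; auto; intros; apply c2d_slice2; auto. Qed.

Lemma KP_prod a b φ : KP a -> KP b -> C2 φ ->
  ex_RInt (fun s => RInt (fun t => a s * b t * φ s t) 0 LL) 0 LL.
Proof. intros Ha Hb Hφ.
  apply ex_RInt_ext with (fun s => a s * RInt (fun t => b t * φ s t) 0 LL).
  { intros s _. rewrite inner_scal; auto. }
  apply KP_int; auto. intros; apply KP_cont; auto. Qed.

Definition Bil n (W : nat -> nat -> R) M :=
  forall p q : nat -> R, (forall i, Rabs (p i) <= 1) -> (forall j, Rabs (q j) <= 1) ->
  Rabs (fsum n (fun i => fsum n (fun j => W i j * p i * q j))) <= M.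

Definition I2 (φ : R -> R -> R) := RInt (fun s => RInt (fun t => φ s t) 0 LL) 0 LL.

Lemma L2D_single n W (a b : nat -> R -> R) φ M : (forall i, KP (a i)) -> (forall j, KP (b j)) -> C2 φ ->
  Bil n W M ->
  Rabs (fsum n (fun i => fsum n (fun j => W i j *
     RInt (fun s => RInt (fun t => a i s * b j t * φ s t) 0 LL) 0 LL)))
  <= M * I2 (fun s t => Rabs (φ s t)).
Proof.
  intros Ha Hb Hφ HW.
  set (G := fun s => fsum n (fun i => fsum n (fun j => W i j * RInt (fun t => a i s * b j t * φ s t) 0 LL))).
  assert (HGex : ex_RInt G 0 LL).
  { unfold G. apply ex_RInt_fsum; intros i _. apply ex_RInt_fsum; intros j _.
    apply ex_RInt_scalR. apply KP_prod; auto. }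
  assert (E1 : fsum n (fun i => fsum n (fun j => W i j *
     RInt (fun s => RInt (fun t => a i s * b j t * φ s t) 0 LL) 0 LL)) = RInt G 0 LL).
  { unfold G. rewrite RInt_fsum.
    2:{ intros i _. apply ex_RInt_fsum; intros j _. apply ex_RInt_scalR. apply KP_prod; auto. }
    apply fsum_ext; intros i _. rewrite RInt_fsum.
    2:{ intros j _. apply ex_RInt_scalR. apply KP_prod; auto. }
    apply fsum_ext; intros j _. rewrite RInt_scalR; auto. apply KP_prod; auto. }
  rewrite E1.
  assert (Habs : C2 (fun s t => Rabs (φ s t))) by (intros s t; apply c2d_abs; auto).
  unfold I2. rewrite <- RInt_scalR.
  2:{ apply ex_RInt_cont. intros; apply param_cont; auto. pose proof LL_pos; lra. }
  apply RInt_abs_bound; auto.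
  { pose proof LL_pos; lra. }
  { apply ex_RInt_scalR, ex_RInt_cont. intros; apply param_cont; auto. pose proof LL_pos; lra. }
  intros s Hs.
  assert (E2 : G s = RInt (fun t => fsum n (fun i => fsum n (fun j => W i j * a i s * b j t)) * φ s t) 0 LL).
  { unfold G. symmetry.
    rewrite (RInt_ext _ (fun t => fsum n (fun i => fsum n (fun j => W i j * (a i s * b j t * φ s t))))).
    2:{ intros t _. rewrite Rmult_comm, <- fsum_scal. apply fsum_ext; intros i _.
        rewrite <- fsum_scal. apply fsum_ext; intros j _. ring. }
    rewrite RInt_fsum.
    2:{ intros i _. apply ex_RInt_fsum; intros j _. apply ex_RInt_scalR. apply ex_inner; auto. }
    apply fsum_ext; intros i _. rewrite RInt_fsum.
    2:{ intros j _. apply ex_RInt_scalR. apply ex_inner; auto. }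
    apply fsum_ext; intros j _. rewrite RInt_scalR; auto. apply ex_inner; auto. }
  rewrite E2. rewrite <- RInt_scalR.
  2:{ apply ex_RInt_cont; intros; apply (c2d_slice2 (fun s t => Rabs (φ s t))); auto. }
  apply RInt_abs_bound.
  { pose proof LL_pos; lra. }
  { apply ex_RInt_ext with (fun t => fsum n (fun i => fsum n (fun j => W i j * a i s * b j t * φ s t))).
    { intros t _. rewrite Rmult_comm, <- fsum_scal. apply fsum_ext; intros i _.
      rewrite <- fsum_scal. apply fsum_ext; intros j _. ring. }
    apply ex_RInt_fsum; intros i _. apply ex_RInt_fsum; intros j _. apply ex_inner; auto. }
  { apply ex_RInt_scalR. apply ex_RInt_cont; intros; apply (c2d_slice2 (fun s t => Rabs (φ s t))); auto. }
  intros t Ht. rewrite Rabs_mult. apply Rmult_le_compat_r; [apply Rabs_pos|].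
  apply HW; intros.
  - apply (proj1 (Ha i)); lra.
  - apply (proj1 (Hb j)); lra.
Qed.

Definition Kr (x t : R) : R := if Rlt_dec t x then t / LL else t / LL - 1.
Definition cK (t : R) : R := / LL.

Lemma cont_lin (a b : R) t : continuous (fun t => t / LL + b) t.
Proof. apply (continuous_plus (fun t => t / LL) (fun _ => b)); [|apply continuous_const].
  apply (continuous_mult (fun t : R => t) (fun _ => / LL)); [apply continuous_id|apply continuous_const]. Qed.

Lemma KP_Kr x : 0 <= x <= LL -> KP (Kr x).
Proof. intros Hx. pose proof LL_pos as HL. split.
  - intros t Ht. unfold Kr. destruct (Rlt_dec t x).
    + rewrite Rabs_right. 2:{ apply Rle_ge. unfold Rdiv; apply Rmult_le_pos; [lra|left; apply Rinv_0_lt_compat; lra]. }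
      apply Rmult_le_reg_r with LL; auto. unfold Rdiv. rewrite Rmult_assoc, Rinv_l by lra. lra.
    + assert (0 <= t / LL <= 1).
      { split. unfold Rdiv; apply Rmult_le_pos; [lra|left; apply Rinv_0_lt_compat; lra].
        apply Rmult_le_reg_r with LL; auto. unfold Rdiv. rewrite Rmult_assoc, Rinv_l by lra. lra. }
      apply Rabs_le; lra.
  - exists x, (fun t => t / LL + 0), (fun t => t / LL + -1). repeat split; try lra.
    + intros; apply cont_lin; exact 0.
    + intros; apply cont_lin; exact 0.
    + intros t Ht. unfold Kr. destruct (Rlt_dec t x); [ring|lra].
    + intros t Ht. unfold Kr. destruct (Rlt_dec t x); [lra|ring].
Qed.

Lemma KP_cK : KP cK.
Proof. pose proof LL_ge1. split.
  - intros t _. unfold cK. rewrite Rabs_right.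
    2:{ apply Rle_ge; left; apply Rinv_0_lt_compat; lra. }
    rewrite <- Rinv_1. apply Rinv_le_contravar; lra.
  - exists 0, (fun _ => / LL), (fun _ => / LL). repeat split; try lra.
    + intros; apply continuous_const.
    + intros; apply continuous_const.
Qed.

Lemma rep1 (f df : R -> R) y : (forall x, is_derive f x (df x)) -> (forall x, continuous df x) ->
  0 <= y <= LL ->
  f y = RInt (fun t => cK t * f t) 0 LL + RInt (fun t => Kr y t * df t) 0 LL.
Proof.
  intros Hd Hc Hy. pose proof LL_pos as HL.
  assert (Hfc : forall x, continuous f x) by (intros; apply (ex_derive_continuous (K:=R_AbsRing) (V:=R_NormedModule)); eexists; apply Hd).
  assert (Hh : RInt (fun t => t / LL * df t) 0 LL = f LL - RInt (fun t => cK t * f t) 0 LL).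
  { assert (HI : is_RInt (fun t => / LL * f t + t / LL * df t) 0 LL
                   (minus (LL / LL * f LL) (0 / LL * f 0))).
    { apply (is_RInt_derive (fun t => t / LL * f t)).
      - intros x _.
        assert (H1 : is_derive (fun t : R => t / LL) x (/ LL)).
        { pose proof (is_derive_scal (fun t => t) x (/ LL) 1 (is_derive_id (K:=R_AbsRing) x)) as H.
          rewrite Rmult_1_r in H. apply (is_derive_ext (fun t => / LL * t)); auto.
          intros; cbn; unfold Rdiv; ring. }
        exact (is_derive_mult (fun t => t / LL) f x (/ LL) (df x) H1 (Hd x) Rmult_comm).
      - intros x _. apply (continuous_plus (fun t => / LL * f t) (fun t => t / LL * df t)).
        + apply (continuous_mult (fun _ => / LL) f); [apply continuous_const|auto].
        + apply (continuous_mult (fun t => t / LL) df); auto.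
          apply (continuous_mult (fun t : R => t) (fun _ => / LL)); [apply continuous_id|apply continuous_const]. }
    apply (is_RInt_unique (V:=R_CompleteNormedModule)) in HI.
    assert (Ex1 : ex_RInt (fun t => / LL * f t) 0 LL) by (apply ex_RInt_cont; intros; apply (continuous_mult (fun _ => / LL) f); [apply continuous_const|auto]).
    assert (Ex2 : ex_RInt (fun t => t / LL * df t) 0 LL).
    { apply ex_RInt_cont; intros; apply (continuous_mult (fun t => t / LL) df); auto.
      apply (continuous_mult (fun t : R => t) (fun _ => / LL)); [apply continuous_id|apply continuous_const]. }
    assert (HI' : RInt (fun t => / LL * f t + t / LL * df t) 0 LL = f LL).
    { rewrite HI. unfold minus, plus, opp; simpl. field. lra. }
    rewrite RInt_plusR in HI' by auto. unfold cK. lra. }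
  assert (Exd : forall a b, ex_RInt df a b) by (intros; apply ex_RInt_cont; auto).
  assert (Extd : forall a b, ex_RInt (fun t => t / LL * df t) a b).
  { intros; apply ex_RInt_cont; intros; apply (continuous_mult (fun t => t / LL) df); auto.
    apply (continuous_mult (fun t : R => t) (fun _ => / LL)); [apply continuous_id|apply continuous_const]. }
  assert (HK : ex_RInt (fun t => Kr y t * df t) 0 LL) by (apply KP_int; auto; apply KP_Kr; auto).
  rewrite <- (RInt_ChaslesR (fun t => Kr y t * df t) 0 y LL).
  2: apply (ex_RInt_Chasles_1 (V:=R_CompleteNormedModule) _ 0 y LL); [lra|exact HK].
  2: apply (ex_RInt_Chasles_2 (V:=R_CompleteNormedModule) _ 0 y LL); [lra|exact HK].
  rewrite (RInt_ext (fun t => Kr y t * df t) (fun t => t / LL * df t) 0 y).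
  2:{ intros x Hx. rewrite Rmin_left, Rmax_right in Hx by lra. unfold Kr. destruct (Rlt_dec x y); [auto|lra]. }
  rewrite (RInt_ext (fun t => Kr y t * df t) (fun t => t / LL * df t - df t) y LL).
  2:{ intros x Hx. rewrite Rmin_left, Rmax_right in Hx by lra. unfold Kr. destruct (Rlt_dec x y); [lra|cbn; ring]. }
  rewrite RInt_minusR by auto.
  assert (Hdf : RInt df y LL = f LL - f y).
  { apply is_RInt_unique. apply (is_RInt_derive f df); intros; auto. }
  rewrite Hdf.
  pose proof (RInt_ChaslesR (fun t => t / LL * df t) 0 y LL (Extd _ _) (Extd _ _)) as HC.
  lra.
Qed.

Definition pX (φ : R -> R -> R) := fun s t => Derive (fun z => φ z t) s.
Definition pY (φ : R -> R -> R) := fun s t => Derive (fun z => φ s z) t.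
Definition I4 (a b : R -> R) (φ : R -> R -> R) :=
  RInt (fun s => RInt (fun t => a s * b t * φ s t) 0 LL) 0 LL.

Lemma split_outer (a : R -> R) (g : R -> R) b φ1 φ2 :
  KP a -> KP b -> C2 φ1 -> C2 φ2 ->
  (forall s, g s = RInt (fun t => cK t * φ1 s t) 0 LL + RInt (fun t => b t * φ2 s t) 0 LL) ->
  RInt (fun s => a s * g s) 0 LL = I4 a cK φ1 + I4 a b φ2.
Proof. intros Ha Hb H1 H2 Hg. unfold I4.
  rewrite <- RInt_plusR by (apply KP_prod; auto using KP_cK).
  apply RInt_ext. intros s _. rewrite Hg.
  rewrite !inner_scal by auto using KP_cK. cbn; ring. Qed.

Lemma rep2 F x y :
  (forall s t, ex_derive (fun z => F z t) s) ->
  (forall s t, ex_derive (fun z => F s z) t) ->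
  (forall s t, ex_derive (fun z => pX F s z) t) ->
  C2 F -> C2 (pX F) -> C2 (pY F) -> C2 (pY (pX F)) ->
  0 <= x <= LL -> 0 <= y <= LL ->
  F x y = I4 cK cK F + I4 cK (Kr y) (pY F) + I4 (Kr x) cK (pX F) + I4 (Kr x) (Kr y) (pY (pX F)).
Proof.
  intros D1 D2 D3 C0 Cx Cy Cyx Hx Hy.
  rewrite (rep1 (fun z => F z y) (fun z => pX F z y) x); auto.
  2:{ intros; apply Derive_correct; auto. }
  2:{ intros; apply c2d_slice1; auto. }
  rewrite (split_outer cK (fun s => F s y) (Kr y) F (pY F)); auto using KP_cK, KP_Kr.
  2:{ intros s. apply rep1; auto. intros; apply Derive_correct; auto. intros; apply c2d_slice2; auto. }
  rewrite (split_outer (Kr x) (fun s => pX F s y) (Kr y) (pX F) (pY (pX F))); auto using KP_cK, KP_Kr.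
  { cbn; ring. }
  intros s. apply rep1; auto. intros; apply Derive_correct; auto. intros; apply c2d_slice2; auto.
Qed.

Definition red (x : R) : R := x + IZR (1 - up (x / LL)) * LL.

Lemma red_range x : 0 <= red x <= LL.
Proof. unfold red. pose proof LL_pos. destruct (archimed (x / LL)) as [H1 H2].
  rewrite minus_IZR. 
  assert (x = (x / LL) * LL) by (field; lra).
  set (u := IZR (up (x / LL))) in *. set (r := x / LL) in *.
  split; nra. Qed.

Lemma per_Z (f : R -> R) x : (forall z, f (z + LL) = f z) -> forall k : Z, f (x + IZR k * LL) = f x.
Proof. intros Hp k. induction k using Z.peano_ind.
  - f_equal; simpl; ring.
  - unfold Z.succ. rewrite plus_IZR. replace (x + (IZR k + 1) * LL) with ((x + IZR k * LL) + LL) by ring.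
    rewrite Hp; auto.
  - unfold Z.pred. rewrite plus_IZR. rewrite <- IHk. rewrite <- (Hp (x + (IZR k + IZR (-1)) * LL)). f_equal. simpl. ring.
Qed.

Lemma red_eq (f : R -> R) x : (forall z, f (z + LL) = f z) -> f (red x) = f x.
Proof. intros Hp. unfold red. apply per_Z; auto. Qed.

Definition per2 (F : R -> R -> R) := forall s t, F (s + LL) t = F s t /\ F s (t + LL) = F s t.

Definition cst (F : R -> R -> R) :=
  I2 (fun s t => Rabs (F s t)) + I2 (fun s t => Rabs (pY F s t)) +
  I2 (fun s t => Rabs (pX F s t)) + I2 (fun s t => Rabs (pY (pX F) s t)).

Definition Reg (F : R -> R -> R) :=
  (forall s t, ex_derive (fun z => F z t) s) /\
  (forall s t, ex_derive (fun z => F s z) t) /\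
  (forall s t, ex_derive (fun z => pX F s z) t) /\
  C2 F /\ C2 (pX F) /\ C2 (pY F) /\ C2 (pY (pX F)) /\ per2 F.

Lemma L2D n W (x y : nat -> R) F M : Reg F -> Bil n W M ->
  Rabs (fsum n (fun i => fsum n (fun j => W i j * F (x i) (y j)))) <= M * cst F.
Proof.
  intros [D1 [D2 [D3 [C0 [Cx [Cy [Cyx Hp]]]]]]] HW.
  assert (E : forall i j, F (x i) (y j) = F (red (x i)) (red (y j))).
  { intros i j. rewrite (red_eq (fun z => F z (red (y j)))) by (intros; apply Hp).
    rewrite (red_eq (fun z => F (x i) z)) by (intros; apply Hp). auto. }
  set (T := fun (a b : nat -> R -> R) φ => fsum n (fun i => fsum n (fun j => W i j *
     RInt (fun s => RInt (fun t => a i s * b j t * φ s t) 0 LL) 0 LL))).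
  assert (Hsum : fsum n (fun i => fsum n (fun j => W i j * F (x i) (y j))) =
    T (fun _ => cK) (fun _ => cK) F + T (fun _ => cK) (fun j => Kr (red (y j))) (pY F)
    + T (fun i => Kr (red (x i))) (fun _ => cK) (pX F)
    + T (fun i => Kr (red (x i))) (fun j => Kr (red (y j))) (pY (pX F))).
  { unfold T. rewrite <- !fsum_plus. apply fsum_ext; intros i _.
    rewrite <- !fsum_plus. apply fsum_ext; intros j _.
    rewrite E. rewrite (rep2 F (red (x i)) (red (y j))); auto using red_range.
    unfold I4. ring. }
  rewrite Hsum. unfold cst.
  assert (B : forall a b φ, (forall i, KP (a i)) -> (forall j, KP (b j)) -> C2 φ ->
            Rabs (T a b φ) <= M * I2 (fun s t => Rabs (φ s t))).
  { intros a b φ Ha Hb Hφ. apply L2D_single; auto. }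
  pose proof (B (fun _ => cK) (fun _ => cK) F (fun _ => KP_cK) (fun _ => KP_cK) C0).
  pose proof (B (fun _ => cK) (fun j => Kr (red (y j))) (pY F) (fun _ => KP_cK) (fun j => KP_Kr _ (red_range _)) Cy).
  pose proof (B (fun i => Kr (red (x i))) (fun _ => cK) (pX F) (fun i => KP_Kr _ (red_range _)) (fun _ => KP_cK) Cx).
  pose proof (B (fun i => Kr (red (x i))) (fun j => Kr (red (y j))) (pY (pX F)) (fun i => KP_Kr _ (red_range _)) (fun j => KP_Kr _ (red_range _)) Cyx).
  match goal with |- Rabs (?a + ?b + ?c + ?d) <= _ =>
    pose proof (Rabs_triang (a + b + c) d); pose proof (Rabs_triang (a + b) c);
    pose proof (Rabs_triang a b) end.
  lra.
Qed.

Definition TB n A M := forall r s t : nat -> R, (forall i, Rabs (r i) <= 1) -> (forall i, Rabs (s i) <= 1) ->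
  (forall i, Rabs (t i) <= 1) -> Rabs (tri n A r s t) <= M.

Lemma bound_mult a b : Rabs a <= 1 -> Rabs b <= 1 -> Rabs (a * b) <= 1.
Proof. intros. rewrite Rabs_mult. pose proof (Rabs_pos a); pose proof (Rabs_pos b). nra. Qed.

Lemma fsum_mul_r n f c : fsum n f * c = fsum n (fun i => f i * c).
Proof. rewrite Rmult_comm, <- fsum_scal. apply fsum_ext; intros; ring. Qed.

Lemma stepA1 n A (x : nat -> R) G M : Reg G -> TB n A M ->
  forall a b : nat -> R, (forall i, Rabs (a i) <= 1) -> (forall i, Rabs (b i) <= 1) ->
  Rabs (fsum n (fun i => fsum n (fun j => fsum n (fun k => A i j k * a i * b j * G (x i) (x k)))))
  <= M * cst G.
Proof.
  intros HG HT a b Ha Hb.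
  rewrite (fsum_ext n _ (fun i => fsum n (fun k => fsum n (fun j => A i j k * a i * b j) * G (x i) (x k)))).
  2:{ intros i _. rewrite fsum_swap. apply fsum_ext; intros k _.
      rewrite Rmult_comm, <- fsum_scal. apply fsum_ext; intros; ring. }
  apply L2D; auto.
  intros p q Hp Hq.
  replace (fsum n (fun i => fsum n (fun j => fsum n (fun j0 => A i j0 j * a i * b j0) * p i * q j)))
    with (tri n A (fun i => a i * p i) b q).
  { apply HT; auto. intros; apply bound_mult; auto. }
  unfold tri. apply fsum_ext; intros i _. rewrite fsum_swap. apply fsum_ext; intros k _.
  rewrite Rmult_assoc, fsum_mul_r. apply fsum_ext; intros; ring.
Qed.

Lemma stepB1 n A (x : nat -> R) F G M : Reg F -> Reg G -> TB n A M ->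
  Rabs (fsum n (fun i => fsum n (fun j => fsum n (fun k => A i j k * F (x i) (x j) * G (x i) (x k)))))
  <= M * cst G * cst F.
Proof.
  intros HF HG HT.
  rewrite (fsum_ext n _ (fun i => fsum n (fun j => fsum n (fun k => A i j k * G (x i) (x k)) * F (x i) (x j)))).
  2:{ intros i _. apply fsum_ext; intros j _. rewrite fsum_mul_r. apply fsum_ext; intros; ring. }
  apply L2D; auto.
  intros p q Hp Hq.
  replace (fsum n (fun i => fsum n (fun j => fsum n (fun k => A i j k * G (x i) (x k)) * p i * q j)))
    with (fsum n (fun i => fsum n (fun j => fsum n (fun k => A i j k * p i * q j * G (x i) (x k))))).
  { apply stepA1; auto. }
  apply fsum_ext; intros i _. apply fsum_ext; intros j _.
  rewrite Rmult_assoc, fsum_mul_r. apply fsum_ext; intros; ring.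
Qed.

Lemma stepA2 n A (x : nat -> R) G M : Reg G -> TB n A M ->
  forall a b : nat -> R, (forall i, Rabs (a i) <= 1) -> (forall i, Rabs (b i) <= 1) ->
  Rabs (fsum n (fun i => fsum n (fun j => fsum n (fun k => A i j k * a i * b j * G (x j) (x k)))))
  <= M * cst G.
Proof.
  intros HG HT a b Ha Hb.
  rewrite fsum_swap.
  rewrite (fsum_ext n _ (fun j => fsum n (fun k => fsum n (fun i => A i j k * a i * b j) * G (x j) (x k)))).
  2:{ intros j _. rewrite fsum_swap. apply fsum_ext; intros k _.
      rewrite fsum_mul_r. apply fsum_ext; intros; ring. }
  apply L2D; auto.
  intros p q Hp Hq.
  replace (fsum n (fun j => fsum n (fun k => fsum n (fun i => A i j k * a i * b j) * p j * q k)))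
    with (tri n A a (fun j => b j * p j) q).
  { apply HT; auto. intros; apply bound_mult; auto. }
  unfold tri. rewrite fsum_swap. apply fsum_ext; intros j _.
  rewrite fsum_swap. apply fsum_ext; intros k _.
  rewrite Rmult_assoc, fsum_mul_r. apply fsum_ext; intros; ring.
Qed.

Lemma stepB2 n A (x : nat -> R) F G M : Reg F -> Reg G -> TB n A M ->
  Rabs (fsum n (fun i => fsum n (fun j => fsum n (fun k => A i j k * F (x i) (x j) * G (x j) (x k)))))
  <= M * cst G * cst F.
Proof.
  intros HF HG HT.
  rewrite (fsum_ext n _ (fun i => fsum n (fun j => fsum n (fun k => A i j k * G (x j) (x k)) * F (x i) (x j)))).
  2:{ intros i _. apply fsum_ext; intros j _. rewrite fsum_mul_r. apply fsum_ext; intros; ring. }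
  apply L2D; auto.
  intros p q Hp Hq.
  replace (fsum n (fun i => fsum n (fun j => fsum n (fun k => A i j k * G (x j) (x k)) * p i * q j)))
    with (fsum n (fun i => fsum n (fun j => fsum n (fun k => A i j k * p i * q j * G (x j) (x k))))).
  { apply stepA2; auto. }
  apply fsum_ext; intros i _. apply fsum_ext; intros j _.
  rewrite Rmult_assoc, fsum_mul_r. apply fsum_ext; intros; ring.
Qed.

Lemma Derive_shift (f : R -> R) s c : Derive f (s + c) = Derive (fun x => f (x + c)) s.
Proof. unfold Derive. f_equal. apply Lim_ext. intros h. f_equal. f_equal. f_equal. ring. Qed.

Lemma per2_pdir d h : per2 h -> per2 (pdir d h).
Proof. intros Hp s t. destruct d; unfold pdir; split.
  - rewrite Derive_shift. apply Derive_ext. intros; apply Hp.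
  - apply Derive_ext. intros; apply Hp.
  - apply Derive_ext. intros; apply Hp.
  - rewrite Derive_shift. apply Derive_ext. intros; apply Hp.
Qed.

Lemma per2_pdl l f : periodic2 f -> per2 (pdl l f).
Proof. intros Hp. induction l; cbn [pdl].
  - intros s t. apply Hp.
  - apply per2_pdir; auto. Qed.

Lemma C2_of_cont f : continuous2 f -> C2 f.
Proof. intros H s t. apply continuity_2d_pt_filterlim. apply H. Qed.

Lemma Reg_pdl f l : smooth_T2 f -> Reg (pdl l f).
Proof. intros [Hp Hs]. unfold Reg.
  split; [intros s t; exact (proj1 (proj2 (Hs l) s t))|].
  split; [intros s t; exact (proj2 (proj2 (Hs l) s t))|].
  split; [intros s t; exact (proj2 (proj2 (Hs (true :: l)) s t))|].
  split; [exact (C2_of_cont _ (proj1 (Hs l)))|].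
  split; [exact (C2_of_cont _ (proj1 (Hs (true :: l))))|].
  split; [exact (C2_of_cont _ (proj1 (Hs (false :: l))))|].
  split; [exact (C2_of_cont _ (proj1 (Hs (false :: true :: l))))|].
  apply per2_pdl; auto.
Qed.

Lemma locally_2d_all (P : R -> R -> Prop) x y : (forall u v, P u v) -> locally_2d P x y.
Proof. intros H. exists (mkposreal 1 Rlt_0_1). intros; apply H. Qed.

Lemma schwarz_pdl f l s t : smooth_T2 f ->
  pdl (true :: false :: l) f s t = pdl (false :: true :: l) f s t.
Proof. intros [Hp Hs]. cbn [pdl]. unfold pdir.
  apply (Schwarz (pdl l f) s t).
  - apply locally_2d_all. intros u v.
    split; [exact (proj1 (proj2 (Hs l) u v))|].
    split; [exact (proj2 (proj2 (Hs l) u v))|].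
    split; [exact (proj1 (proj2 (Hs (false :: l)) u v))|].
    exact (proj2 (proj2 (Hs (true :: l)) u v)).
  - exact (C2_of_cont _ (proj1 (Hs (true :: false :: l))) s t).
  - exact (C2_of_cont _ (proj1 (Hs (false :: true :: l))) s t).
Qed.

Lemma I2_ext φ ψ : (forall s t, φ s t = ψ s t) -> I2 φ = I2 ψ.
Proof. intros H. assert (φ = ψ) by (apply functional_extensionality; intros; apply functional_extensionality; auto).
  subst; auto. Qed.

Lemma sq_C2 φ : C2 φ -> C2 (fun s t => (φ s t) ^ 2).
Proof. intros H s t. apply (continuity_2d_pt_ext (fun s t => φ s t * φ s t)).
  { intros; ring. } apply continuity_2d_pt_mult; auto. Qed.

Lemma I2_nonneg φ : C2 φ -> (forall s t, 0 <= φ s t) -> 0 <= I2 φ.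
Proof. intros H Hp. pose proof LL_pos. unfold I2. apply RInt_ge_0; [lra| |].
  - apply ex_RInt_cont. intros; apply param_cont; auto; lra.
  - intros x _. apply RInt_ge_0; [lra| |auto].
    apply ex_RInt_cont. intros; apply c2d_slice2; auto. Qed.

Lemma I2_abs_bound φ : C2 φ -> I2 (fun s t => (φ s t) ^ 2) <= 1 ->
  I2 (fun s t => Rabs (φ s t)) <= (LL * LL + 1) / 2.
Proof.
  intros H H1. pose proof LL_pos.
  assert (Cq : C2 (fun s t => / 2 + / 2 * (φ s t) ^ 2)).
  { intros s t. apply continuity_2d_pt_plus; [apply continuity_2d_pt_const|].
    apply continuity_2d_pt_mult; [apply continuity_2d_pt_const|apply sq_C2; auto]. }
  assert (Ca : C2 (fun s t => Rabs (φ s t))) by (intros s t; apply c2d_abs; auto).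
  apply Rle_trans with (I2 (fun s t => / 2 + / 2 * (φ s t) ^ 2)).
  - unfold I2. apply RInt_le; [lra| | |].
    + apply ex_RInt_cont. intros; apply param_cont; auto; lra.
    + apply ex_RInt_cont. intros; apply param_cont; auto; lra.
    + intros s _. apply RInt_le; [lra| | |].
      * apply ex_RInt_cont. intros; apply (c2d_slice2 (fun s t => Rabs (φ s t))); auto.
      * apply ex_RInt_cont. intros; apply (c2d_slice2 (fun s t => / 2 + / 2 * (φ s t) ^ 2)); auto.
      * intros t _. cbv beta. set (x := φ s t). pose proof (Rabs_pos x). 
        assert (x ^ 2 = Rabs x * Rabs x) by (rewrite <- Rabs_mult; simpl; rewrite Rmult_1_r; rewrite Rabs_right; [auto| apply Rle_ge, Rle_0_sqr]).
        rewrite H3. set (a := Rabs x). assert (0 <= (a - 1) * (a - 1)) by apply Rle_0_sqr. replace ((a - 1) * (a - 1)) with (a * a - 2 * a + 1) in H4 by ring. lra.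
  - unfold I2.
    assert (Sq : forall s, ex_RInt (fun t => (φ s t) ^ 2) 0 LL).
    { intros s. apply ex_RInt_cont. intros; apply (c2d_slice2 (fun s t => (φ s t) ^ 2)); auto. apply sq_C2; auto. }
    rewrite (RInt_ext (fun s => RInt (fun t => / 2 + / 2 * (φ s t) ^ 2) 0 LL)
                      (fun s => LL / 2 + / 2 * RInt (fun t => (φ s t) ^ 2) 0 LL)).
    2:{ intros s _. rewrite RInt_plusR.
        - rewrite RInt_constR, RInt_scalR by auto. cbn. field.
        - apply ex_RInt_const.
        - apply ex_RInt_scalR; auto. }
    assert (Eq : ex_RInt (fun s => RInt (fun t => (φ s t) ^ 2) 0 LL) 0 LL).
    { apply ex_RInt_cont. intros; apply param_cont; [lra|]. apply sq_C2; auto. }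
    rewrite RInt_plusR.
    + rewrite RInt_constR, RInt_scalR by auto. unfold I2 in H1. lra.
    + apply ex_RInt_const.
    + apply ex_RInt_scalR; auto.
Qed.

Lemma C2_pdl f l : smooth_T2 f -> C2 (pdl l f).
Proof. intros [_ Hs]. exact (C2_of_cont _ (proj1 (Hs l))). Qed.

Lemma H3_terms g : smooth_T2 g -> H3norm g <= 1 ->
  forall a b, (a < 4)%nat -> (b < 4 - a)%nat -> int_T2 (fun x y => (pd a b g x y) ^ 2) <= 1.
Proof.
  intros Hg H a b Ha Hb.
  set (J := fun a b => int_T2 (fun x y => (pd a b g x y) ^ 2)).
  assert (HJ : forall a b, 0 <= J a b).
  { intros a' b'. unfold J, int_T2. apply (I2_nonneg (fun x y => (pd a' b' g x y) ^ 2)).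
    - apply sq_C2. apply C2_pdl; auto.
    - intros; apply pow2_ge_0. }
  set (S := fsum 4 (fun a => fsum (4 - a) (fun b => J a b))).
  assert (HS : S <= 1).
  { destruct (Rle_dec S 1) as [|Hn]; auto. exfalso.
    assert (sqrt 1 < sqrt S) by (apply sqrt_lt_1_alt; lra). rewrite sqrt_1 in H0.
    assert (E : H3norm g = sqrt S) by reflexivity. lra. }
  apply Rle_trans with S; auto.
  apply Rle_trans with (fsum (4 - a) (fun b => J a b)).
  - apply (fsum_nonneg_term (4 - a) (fun b => J a b) b); auto.
  - apply (fsum_nonneg_term 4 (fun a => fsum (4 - a) (fun b => J a b)) a); auto.
    intros; apply fsum_nonneg; auto.
Qed.

Definition C0 := 4 * ((LL * LL + 1) / 2).

Lemma abs_term g a b φ : smooth_T2 g -> H3norm g <= 1 -> (a < 4)%nat -> (b < 4 - a)%nat ->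
  (forall s t, φ s t = pd a b g s t) -> I2 (fun s t => Rabs (φ s t)) <= (LL * LL + 1) / 2.
Proof. intros Hg H Ha Hb E.
  rewrite (I2_ext _ (fun s t => Rabs (pd a b g s t))) by (intros; rewrite E; auto).
  apply I2_abs_bound. { apply C2_pdl; auto. }
  apply (H3_terms g Hg H a b Ha Hb).
Qed.

Lemma cst_F1 g : smooth_T2 g -> H3norm g <= 1 -> cst (pdl (true :: nil) g) <= C0.
Proof. intros Hg H. unfold cst, C0.
  assert (E1 : forall s t, pY (pdl (true :: nil) g) s t = pd 1 1 g s t).
  { intros s t. change (pdl (false :: true :: nil) g s t = pdl (true :: false :: nil) g s t).
    symmetry. apply schwarz_pdl; auto. }
  assert (E2 : forall s t, pY (pX (pdl (true :: nil) g)) s t = pd 2 1 g s t).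
  { intros s t. change (pdl (false :: true :: true :: nil) g s t = pdl (true :: true :: false :: nil) g s t).
    rewrite <- (schwarz_pdl g (true :: nil) s t Hg).
    change (Derive (fun z => pdl (false :: true :: nil) g z t) s = Derive (fun z => pdl (true :: false :: nil) g z t) s).
    apply Derive_ext. intros z. symmetry. apply schwarz_pdl; auto. }
  pose proof (abs_term g 1 0 (pdl (true :: nil) g) Hg H ltac:(lia) ltac:(simpl; lia) (fun s t => eq_refl)).
  pose proof (abs_term g 1 1 _ Hg H ltac:(lia) ltac:(simpl; lia) E1).
  pose proof (abs_term g 2 0 (pX (pdl (true :: nil) g)) Hg H ltac:(lia) ltac:(simpl; lia) (fun s t => eq_refl)).
  pose proof (abs_term g 2 1 _ Hg H ltac:(lia) ltac:(simpl; lia) E2).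
  lra.
Qed.

Lemma cst_F2 g : smooth_T2 g -> H3norm g <= 1 -> cst (pdl (false :: nil) g) <= C0.
Proof. intros Hg H. unfold cst, C0.
  assert (E2 : forall s t, pY (pX (pdl (false :: nil) g)) s t = pd 1 2 g s t).
  { intros s t. change (pdl (false :: true :: false :: nil) g s t = pdl (true :: false :: false :: nil) g s t).
    symmetry. apply schwarz_pdl; auto. }
  pose proof (abs_term g 0 1 (pdl (false :: nil) g) Hg H ltac:(lia) ltac:(simpl; lia) (fun s t => eq_refl)).
  pose proof (abs_term g 0 2 (pY (pdl (false :: nil) g)) Hg H ltac:(lia) ltac:(simpl; lia) (fun s t => eq_refl)).
  pose proof (abs_term g 1 1 (pX (pdl (false :: nil) g)) Hg H ltac:(lia) ltac:(simpl; lia) (fun s t => eq_refl)).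
  pose proof (abs_term g 1 2 _ Hg H ltac:(lia) ltac:(simpl; lia) E2).
  lra.
Qed.

Lemma xihat_bound p xi i j : 0 < p -> Rabs (xihat p xi i j) <= / p + 1.
Proof. intros Hp. unfold xihat, Rdiv. pose proof (Rinv_0_lt_compat p Hp).
  destruct (xi i j); simpl; apply Rabs_le; lra. Qed.

Lemma tri_bounded n A c r s t : (forall i j k, Rabs (A i j k) <= c) ->
  (forall i, Rabs (r i) <= 1) -> (forall i, Rabs (s i) <= 1) -> (forall i, Rabs (t i) <= 1) ->
  Rabs (tri n A r s t) <= INR n * (INR n * (INR n * c)).
Proof. intros HA Hr Hs Ht. unfold tri.
  apply fsum_const_le; intros i _. apply fsum_const_le; intros j _. apply fsum_const_le; intros k _.
  rewrite !Rabs_mult. specialize (HA i j k). specialize (Hr i). specialize (Hs j). specialize (Ht k).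
  pose proof (Rabs_pos (A i j k)). pose proof (Rabs_pos (r i)). pose proof (Rabs_pos (s j)). pose proof (Rabs_pos (t k)).
  assert (Rabs (A i j k) * Rabs (r i) <= c) by nra.
  assert (Rabs (A i j k) * Rabs (r i) * Rabs (s j) <= c) by (pose proof (Rmult_le_pos _ _ H H0); nra).
  pose proof (Rmult_le_pos _ _ (Rmult_le_pos _ _ H H0) H1). nra.
Qed.

Definition A1 n p xi := fun i j k => / (INR n ^ 3) * xihat p xi i j * xihat p xi i k.
Definition A2 n p xi := fun i j k => / (INR n ^ 3) * xihat p xi i j * xihat p xi j k.

Lemma tri_A_eq n (A : nat -> nat -> nat -> R) c (B : nat -> nat -> nat -> R) r s t :
  (forall i j k, A i j k = c * B i j k) ->
  tri n A r s t = c * fsum n (fun i => fsum n (fun j => fsum n (fun k => B i j k * r i * s j * t k))).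
Proof. intros H. unfold tri. rewrite <- fsum_scal. apply fsum_ext; intros i _.
  rewrite <- fsum_scal. apply fsum_ext; intros j _. rewrite <- fsum_scal. apply fsum_ext; intros k _.
  rewrite H; ring. Qed.

Lemma TB1 n p xi : 0 < p -> TB n (A1 n p xi) (S_ijik n p xi) /\ 0 <= S_ijik n p xi.
Proof. intros Hp.
  set (c := Rabs (/ (INR n ^ 3)) * ((/ p + 1) * (/ p + 1))).
  assert (HA : forall i j k, Rabs (A1 n p xi i j k) <= c).
  { intros. unfold A1, c. rewrite !Rabs_mult. pose proof (xihat_bound p xi i j Hp). pose proof (xihat_bound p xi i k Hp).
    pose proof (Rabs_pos (/ INR n ^ 3)). pose proof (Rabs_pos (xihat p xi i j)). pose proof (Rabs_pos (xihat p xi i k)).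
    rewrite Rmult_assoc. apply Rmult_le_compat_l; auto. apply Rmult_le_compat; auto. }
  assert (Hs : forall (r s t : nat -> bool), Rabs (tri n (A1 n p xi) (fun i => sgn (r i)) (fun j => sgn (s j)) (fun k => sgn (t k)))
            <= S_ijik n p xi).
  { intros r s t. unfold S_ijik. apply (lub_ge _ (INR n * (INR n * (INR n * c)))).
    - intros w [r' [s' [t' ->]]].
      rewrite <- (tri_A_eq n (A1 n p xi) (/ (INR n ^ 3)) (fun i j k => xihat p xi i j * xihat p xi i k)).
      2:{ intros; unfold A1; ring. }
      apply tri_bounded; auto; intros; apply sgn_bound.
    - exists r, s, t. rewrite (tri_A_eq n (A1 n p xi) (/ (INR n ^ 3)) (fun i j k => xihat p xi i j * xihat p xi i k)); auto.
      intros; unfold A1; ring. }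
  split.
  - intros r s t Hr Hs' Ht. apply tri_sign; auto.
  - eapply Rle_trans; [apply Rabs_pos|]. apply (Hs (fun _ => true) (fun _ => true) (fun _ => true)).
Qed.

Lemma TB2 n p xi : 0 < p -> TB n (A2 n p xi) (S_ijjk n p xi) /\ 0 <= S_ijjk n p xi.
Proof. intros Hp.
  set (c := Rabs (/ (INR n ^ 3)) * ((/ p + 1) * (/ p + 1))).
  assert (HA : forall i j k, Rabs (A2 n p xi i j k) <= c).
  { intros. unfold A2, c. rewrite !Rabs_mult. pose proof (xihat_bound p xi i j Hp). pose proof (xihat_bound p xi j k Hp).
    pose proof (Rabs_pos (/ INR n ^ 3)). pose proof (Rabs_pos (xihat p xi i j)). pose proof (Rabs_pos (xihat p xi j k)).
    rewrite Rmult_assoc. apply Rmult_le_compat_l; auto. apply Rmult_le_compat; auto. }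
  assert (Hs : forall (r s t : nat -> bool), Rabs (tri n (A2 n p xi) (fun i => sgn (r i)) (fun j => sgn (s j)) (fun k => sgn (t k)))
            <= S_ijjk n p xi).
  { intros r s t. unfold S_ijjk. apply (lub_ge _ (INR n * (INR n * (INR n * c)))).
    - intros w [r' [s' [t' ->]]].
      rewrite <- (tri_A_eq n (A2 n p xi) (/ (INR n ^ 3)) (fun i j k => xihat p xi i j * xihat p xi j k)).
      2:{ intros; unfold A2; ring. }
      apply tri_bounded; auto; intros; apply sgn_bound.
    - exists r, s, t. rewrite (tri_A_eq n (A2 n p xi) (/ (INR n ^ 3)) (fun i j k => xihat p xi i j * xihat p xi j k)); auto.
      intros; unfold A2; ring. }
  split.
  - intros r s t Hr Hs' Ht. apply tri_sign; auto.
  - eapply Rle_trans; [apply Rabs_pos|]. apply (Hs (fun _ => true) (fun _ => true) (fun _ => true)).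
Qed.

Lemma cont_fsum n (f : nat -> R -> R) x : (forall i, (i < n)%nat -> continuous (f i) x) ->
  continuous (fun s => fsum n (fun i => f i s)) x.
Proof. induction n; intros H; cbn [fsum].
  - apply continuous_const.
  - pose proof (IHn (fun i Hi => H i ltac:(lia))) as H1. pose proof (H n ltac:(lia)) as H2.
    exact (continuous_plus (fun s => fsum n (fun i => f i s)) (f n) x H1 H2).
Qed.

Lemma cont_comp2 (F : R -> R -> R) (u v : R -> R) s : continuous2 F -> continuous u s -> continuous v s ->
  continuous (fun s => F (u s) (v s)) s.
Proof. intros HF Hu Hv. apply (continuous_comp_2 u v F); auto. Qed.

Lemma cst_nonneg G : Reg G -> 0 <= cst G.
Proof. intros [_ [_ [_ [C0' [Cx [Cy [Cyx _]]]]]]]. unfold cst.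
  assert (forall φ, C2 φ -> 0 <= I2 (fun s t => Rabs (φ s t))).
  { intros φ Hφ. apply I2_nonneg. intros s t; apply c2d_abs; auto. intros; apply Rabs_pos. }
  pose proof (H G C0'). pose proof (H _ Cx). pose proof (H _ Cy). pose proof (H _ Cyx). lra. Qed.

Theorem mainTheorem6 (Gam : R -> R -> R) (HGam : smooth_T2 Gam) :
  exists CG : R,
    forall (T : R) (p : nat -> R),
      0 < T -> (forall n, 0 < p n <= 1) ->
      exists N : nat,
        forall n : nat, (2 <= n)%nat -> (N <= n)%nat ->
        forall (xi : nat -> nat -> bool) (theta : nat -> R -> R),
          (forall i s, continuous (theta i) s) ->
          forall t, 0 <= t <= T ->
            Rbar_le (Hm3norm (Cn n (p n) xi Gam theta t))
                    (Finite (T * CG * (S_ijik n (p n) xi + S_ijjk n (p n) xi))).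
Proof.
  assert (RG : Reg (pdl nil Gam)) by (apply Reg_pdl; auto).
  change (Reg Gam) in RG.
  pose proof (cst_nonneg Gam RG) as cG0.
  exists (C0 * cst Gam). intros T p HT Hp. exists 0%nat.
  intros n Hn _ xi theta Hth t Ht.
  destruct (TB1 n (p n) xi (proj1 (Hp n))) as [TB1' S1pos].
  destruct (TB2 n (p n) xi (proj1 (Hp n))) as [TB2' S2pos].
  set (S1 := S_ijik n (p n) xi) in *. set (S2 := S_ijjk n (p n) xi) in *.
  assert (C0pos : 0 <= C0) by (unfold C0; pose proof LL_pos; nra).
  unfold Hm3norm. destruct (Lub_Rbar_correct (fun v => exists g, smooth_T2 g /\ H3norm g <= 1 /\ v = Rabs (Cn n (p n) xi Gam theta t g))) as [_ Hl].
  apply Hl. intros v [g [Hg [Hn3 ->]]]. simpl.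
  assert (RF1 : Reg (pdl (true :: nil) g)) by (apply Reg_pdl; auto).
  assert (RF2 : Reg (pdl (false :: nil) g)) by (apply Reg_pdl; auto).
  pose proof (cst_F1 g Hg Hn3) as cF1. pose proof (cst_F2 g Hg Hn3) as cF2.
  pose proof (cst_nonneg _ RF1) as cF1p. pose proof (cst_nonneg _ RF2) as cF2p.
  destruct HGam as [_ HGs]. destruct Hg as [_ Hgs].
  set (J1 := fun s => / (INR n ^ 3) *
    fsum n (fun i => fsum n (fun j => fsum n (fun k =>
      xihat (p n) xi i j * xihat (p n) xi i k *
      pdl (true :: nil) g (theta i s) (theta j s) *
      Gam (theta i s) (theta k s))))).
  set (J2 := fun s => / (INR n ^ 3) *
    fsum n (fun i => fsum n (fun j => fsum n (fun k =>
      xihat (p n) xi i j * xihat (p n) xi j k *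
      pdl (false :: nil) g (theta i s) (theta j s) *
      Gam (theta j s) (theta k s))))).
  assert (B1 : forall s, Rabs (J1 s) <= S1 * cst Gam * C0).
  { intros s. unfold J1. rewrite <- !fsum_scal.
    rewrite (fsum_ext n _ (fun i => fsum n (fun j => fsum n (fun k =>
       A1 n (p n) xi i j k * pdl (true :: nil) g (theta i s) (theta j s) * Gam (theta i s) (theta k s))))).
    2:{ intros i _. rewrite <- fsum_scal. apply fsum_ext; intros j _. rewrite <- fsum_scal.
        apply fsum_ext; intros k _. unfold A1. ring. }
    eapply Rle_trans. { apply (stepB1 n (A1 n (p n) xi) (fun i => theta i s) _ _ S1); auto. }
    apply Rmult_le_compat_l; auto. apply Rmult_le_pos; auto. }
  assert (B2 : forall s, Rabs (J2 s) <= S2 * cst Gam * C0).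
  { intros s. unfold J2. rewrite <- !fsum_scal.
    rewrite (fsum_ext n _ (fun i => fsum n (fun j => fsum n (fun k =>
       A2 n (p n) xi i j k * pdl (false :: nil) g (theta i s) (theta j s) * Gam (theta j s) (theta k s))))).
    2:{ intros i _. rewrite <- fsum_scal. apply fsum_ext; intros j _. rewrite <- fsum_scal.
        apply fsum_ext; intros k _. unfold A2. ring. }
    eapply Rle_trans. { apply (stepB2 n (A2 n (p n) xi) (fun i => theta i s) _ _ S2); auto. }
    apply Rmult_le_compat_l; auto. apply Rmult_le_pos; auto. }
  assert (E1 : ex_RInt J1 0 t).
  { apply ex_RInt_cont. intros s. unfold J1.
    apply (continuous_mult (fun _ => / (INR n ^ 3))); [apply continuous_const|].
    apply cont_fsum; intros i _. apply cont_fsum; intros j _. apply cont_fsum; intros k _.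
    apply (continuous_mult (fun s => xihat (p n) xi i j * xihat (p n) xi i k * pdl (true :: nil) g (theta i s) (theta j s))).
    2:{ apply cont_comp2; auto. apply (proj1 (HGs nil)). }
    apply (continuous_mult (fun _ => xihat (p n) xi i j * xihat (p n) xi i k)); [apply continuous_const|].
    apply cont_comp2; auto. apply (proj1 (Hgs (true :: nil))). }
  assert (E2 : ex_RInt J2 0 t).
  { apply ex_RInt_cont. intros s. unfold J2.
    apply (continuous_mult (fun _ => / (INR n ^ 3))); [apply continuous_const|].
    apply cont_fsum; intros i _. apply cont_fsum; intros j _. apply cont_fsum; intros k _.
    apply (continuous_mult (fun s => xihat (p n) xi i j * xihat (p n) xi j k * pdl (false :: nil) g (theta i s) (theta j s))).
    2:{ apply cont_comp2; auto. apply (proj1 (HGs nil)). }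
    apply (continuous_mult (fun _ => xihat (p n) xi i j * xihat (p n) xi j k)); [apply continuous_const|].
    apply cont_comp2; auto. apply (proj1 (Hgs (false :: nil))). }
  change (Rabs (RInt J1 0 t + RInt J2 0 t) <= T * (C0 * cst Gam) * (S1 + S2)).
  pose proof (abs_RInt_le_const J1 0 t _ (proj1 Ht) E1 (fun s _ => B1 s)).
  pose proof (abs_RInt_le_const J2 0 t _ (proj1 Ht) E2 (fun s _ => B2 s)).
  eapply Rle_trans; [apply Rabs_triang|].
  assert (0 <= C0 * cst Gam) by (apply Rmult_le_pos; auto).
  assert (t * (C0 * cst Gam) * (S1 + S2) <= T * (C0 * cst Gam) * (S1 + S2)).
  { apply Rmult_le_compat_r; [lra|]. apply Rmult_le_compat_r; lra. }
  assert ((t - 0) * (S1 * cst Gam * C0) + (t - 0) * (S2 * cst Gam * C0) = t * (C0 * cst Gam) * (S1 + S2)) by ring.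
  lra.
Qed.
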